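(* Let $d \geq 2$, $N, K \geq 1$ be integers, $\mathbf{y}_1,\ldots,\mathbf{y}_N \in \mathbb{R}^d$ with matrix $\mathbf{Y} = [\mathbf{y}_1,\ldots,\mathbf{y}_N]$, and $\rho_k^{[i]} \geq 0$ with $\sum_{k=1}^K \rho_k^{[i]} = 1$ for each $i$. Put $\mathbf{A}_k = \sum_{i} \rho_k^{[i]}\mathbf{y}_i\mathbf{y}_i^\mathrm{T}$, $\gamma_k = \sum_i \rho_k^{[i]}$, $\lambda_k = $ largest eigenvalue of $\mathbf{A}_k$. For $S \subseteq [K]$ define $\sigma^2(S) = \big(\|\mathbf{Y}\|_\mathrm{F}^2 - \sum_{k\in S}\lambda_k\big)/\big(dN - \sum_{k\in S}\gamma_k\big)$ and $g(S) = \big[dN - \sum_{k\in S}\gamma_k\big]\ln\sigma^2(S) + \sum_{k\in S}\gamma_k\ln(\lambda_k/\gamma_k)$, and assume $\gamma_k>0$, $\lambda_k>0$ for all $k$ and $\sigma^2(S)>0$ for all $S\subseteq[K]$. Let $\mathcal{V} = \{S \subseteq [K] : \sigma^2(S) \leq \lambda_k/\gamma_k \text{ for all } k\in S\}$. Consider the procedure: start with $S = \emptyset$; while the set $L = \{k \in [K]\setminus S : \sigma^2(S) \leq \lambda_k/\gamma_k\}$ is nonempty, choose any $k^\star \in L$ and replace $S$ by $S\cup\{k^\star\}$. Then this procedure terminates, every set $S$ it produces lies in $\mathcal{V}$, and its output is the unique saturated set (a set $S\in\mathcal{V}$ with $\sigma^2(S) > \lambda_j/\gamma_j$ for all $j \notin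 S$), which is a minimizer of $g$ over $\mathcal{V}$.
   Context: $[K] = \{1,\ldots,K\}$; $\|\cdot\|_\mathrm{F}$ is the Frobenius norm. *)

(* Defs.v *)
From HB Require Import structures.
From mathcomp Require Import all_boot all_order all_algebra.
From mathcomp Require Import reals exp.
Set Implicit Arguments. Unset Strict Implicit. Unset Printing Implicit Defensive.
Import Order.TTheory GRing.Theory Num.Theory.
Local Open Scope ring_scope.

Definition dataY (R : realType) (d N : nat) (y : 'I_N -> 'cV[R]_d) : 'M[R]_(d, N) :=
  \matrix_(a < d, i < N) y i a 0.

Definition frob2 (R : realType) (m n : nat) (M : 'M[R]_(m, n)) : R :=
  \sum_(a < m) \sum_(b < n) M a b ^+ 2.

Definition Amat (R : realType) (d N K : nat) (y : 'I_N -> 'cV[R]_d)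
  (rho : 'I_K -> 'I_N -> R) (k : 'I_K) : 'M[R]_d :=
  \sum_(i < N) rho k i *: (y i *m (y i)^T).

Definition gam (R : realType) (N K : nat) (rho : 'I_K -> 'I_N -> R) (k : 'I_K) : R :=
  \sum_(i < N) rho k i.

Definition is_largest_eigenvalue (R : realType) (n : nat) (A : 'M[R]_n) (l : R) : Prop :=
  eigenvalue A l /\ (forall mu : R, eigenvalue A mu -> mu <= l).

Definition sigma2 (R : realType) (d N K : nat) (y : 'I_N -> 'cV[R]_d)
  (rho : 'I_K -> 'I_N -> R) (lam : 'I_K -> R) (S : {set 'I_K}) : R :=
  (frob2 (dataY y) - \sum_(k in S) lam k) /
  ((d * N)%:R - \sum_(k in S) gam rho k).

Definition gfun (R : realType) (d N K : nat) (y : 'I_N -> 'cV[R]_d)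
  (rho : 'I_K -> 'I_N -> R) (lam : 'I_K -> R) (S : {set 'I_K}) : R :=
  ((d * N)%:R - \sum_(k in S) gam rho k) * ln (sigma2 y rho lam S)
  + \sum_(k in S) gam rho k * ln (lam k / gam rho k).

Definition inV (R : realType) (d N K : nat) (y : 'I_N -> 'cV[R]_d)
  (rho : 'I_K -> 'I_N -> R) (lam : 'I_K -> R) (S : {set 'I_K}) : Prop :=
  forall k, k \in S -> sigma2 y rho lam S <= lam k / gam rho k.

Definition saturated (R : realType) (d N K : nat) (y : 'I_N -> 'cV[R]_d)
  (rho : 'I_K -> 'I_N -> R) (lam : 'I_K -> R) (S : {set 'I_K}) : Prop :=
  inV y rho lam S /\ (forall j, j \notin S -> lam j / gam rho j < sigma2 y rho lam S).

Definition candL (R : realType) (d N K : nat) (y : 'I_N -> 'cV[R]_d)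
  (rho : 'I_K -> 'I_N -> R) (lam : 'I_K -> R) (S : {set 'I_K}) : {set 'I_K} :=
  [set k | (k \notin S) && (sigma2 y rho lam S <= lam k / gam rho k)].

Definition step (R : realType) (d N K : nat) (y : 'I_N -> 'cV[R]_d)
  (rho : 'I_K -> 'I_N -> R) (lam : 'I_K -> R) (S S' : {set 'I_K}) : Prop :=
  exists2 k, k \in candL y rho lam S & S' = k |: S.

Inductive reachable (R : realType) (d N K : nat) (y : 'I_N -> 'cV[R]_d)
  (rho : 'I_K -> 'I_N -> R) (lam : 'I_K -> R) : {set 'I_K} -> Prop :=
| reach0 : reachable y rho lam set0
| reachS S S' : reachable y rho lam S -> step y rho lam S S' -> reachable y rho lam S'.

(* Main.v *)
Require Import Defs.
From HB Require Import structures.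
From mathcomp Require Import all_boot all_order all_algebra.
From mathcomp Require Import reals exp.
From mathcomp Require Import lra ring zify.
Set Implicit Arguments. Unset Strict Implicit. Unset Printing Implicit Defensive.
Import Order.TTheory GRing.Theory Num.Theory.
Local Open Scope ring_scope.

Lemma ln_le_sub1 {R : realType} (z : R) : 0 < z -> ln z <= z - 1.
Proof.
move=> z0; have := @le_ln1Dx R (z - 1).
have -> : 1 + (z - 1) = z by rewrite addrC subrK.
apply; lra.
Qed.

Lemma tang (R : realType) (g l x s : R) : 0 <= g -> 0 < x -> 0 < s ->
  g * ln s + l / s + (l - g * s) * (x^-1 - s^-1) <= g * ln x + l / x.
Proof.
move=> g0 x0 s0.
have h := @ln_le_sub1 _ (s / x) (divr_gt0 s0 x0).
rewrite ln_div ?posrE // in h.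
have e : s * (x^-1 - s^-1) = s / x - 1 by rewrite mulrBr mulfV ?gt_eqF.
have : g * (ln s - ln x) <= g * (s / x - 1) by rewrite ler_wpM2l.
rewrite -e; nra.
Qed.

Lemma med (R : realType) (a b l g : R) : 0 < b -> 0 < g -> 0 < b - g ->
  a / b <= l / g -> (a - l) / (b - g) <= a / b.
Proof.
move=> b0 g0 bg H.
rewrite ler_pdivrMr // mulrAC ler_pdivlMr // in H.
rewrite ler_pdivrMr // mulrAC ler_pdivlMr //. nra.
Qed.

Definition sg {R : realType} {K : nat} (F D : R) (l g : 'I_K -> R) (S : {set 'I_K}) : R :=
  (F - \sum_(k in S) l k) / (D - \sum_(k in S) g k).

Lemma sg_step (R : realType) K (F D : R) (l g : 'I_K -> R) (S : {set 'I_K}) (k : 'I_K) :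
  (forall S : {set 'I_K}, 0 < D - \sum_(k in S) g k) -> (forall k, 0 < g k) ->
  k \notin S -> sg F D l g S <= l k / g k -> sg F D l g (k |: S) <= sg F D l g S.
Proof.
move=> HD Hg kS H.
have := HD (k |: S). rewrite /sg !big_setU1 //= in H * => h.
set L := \sum_(j in S) l j in H *; set G := \sum_(j in S) g j in H h *.
have -> : F - (l k + L) = F - L - l k by ring.
have -> : D - (g k + G) = D - G - g k by ring.
apply: med => //; first exact: HD.
by rewrite (_ : D - G - g k = D - (g k + G)) //; ring.
Qed.

Lemma acc_card (T : finType) (r : {set T} -> {set T} -> Prop) :
  (forall S S', r S S' -> #|S| < #|S'|)%N -> forall S, Acc (fun S' S => r S S') S.
Proof.
move=> H; suff h : forall n (S : {set T}), (#|T| - #|S| <= n)%N -> Acc (fun S' S => r S S') S.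
  by move=> S; exact: (h _ S (leqnn _)).
elim=> [|n IH] S hS; constructor=> S' hr; have := H _ _ hr; have := max_card (mem S').
  move=> h1 h2; exfalso; move: h1 h2 hS; set a := #|mem S'|; set b := #|S|; idtac; lia.
move=> h1 h2; apply: IH; lia.
Qed.

Lemma sat_sub (R : realType) K (F D : R) (l g : 'I_K -> R) (S T : {set 'I_K}) :
  (forall S : {set 'I_K}, 0 < D - \sum_(k in S) g k) -> (forall k, 0 < g k) ->
  (forall j, j \notin S -> l j / g j < sg F D l g S) ->
  (forall k, k \in T -> sg F D l g T <= l k / g k) ->
  S \subset T -> T \subset S.
Proof.
move=> HD Hg HS2 HT1 sST; apply/subsetP => k kT; apply/negPn/negP => kS.
have ts : sg F D l g T < sg F D l g S.
  exact: le_lt_trans (HT1 _ kT) (HS2 _ kS).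
set s := sg F D l g S in ts HS2; set t := sg F D l g T in ts HT1.
have eS : s * (D - \sum_(j in S) g j) = F - \sum_(j in S) l j.
  by rewrite /s /sg divfK // gt_eqF.
have eT : t * (D - \sum_(j in T) g j) = F - \sum_(j in T) l j.
  by rewrite /t /sg divfK // gt_eqF.
have hT := HD T.
rewrite !(big_setID (A:=T) S) (setIidPr sST) /= in eT hT.
have hM : \sum_(j in T :\: S) l j <= s * \sum_(j in T :\: S) g j.
  rewrite mulr_sumr; apply: ler_sum => j; rewrite in_setD => /andP[jS _].
  have := HS2 _ jS; rewrite ltr_pdivrMr // => h; exact: ltW.
move: eS eT hT hM ts.
set a := \sum_(j in S) g j; set b := \sum_(j in T :\: S) g j.
set c := \sum_(j in S) l j; set e := \sum_(j in T :\: S) l j.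
move=> eS eT hT hM ts. nra.
Qed.

Definition term {R : realType} {K : nat} (l g : 'I_K -> R) (x : R) (X : {set 'I_K}) (k : 'I_K) : R :=
  if k \in X then g k * ln (l k / g k) + l k / (l k / g k) else g k * ln x + l k / x.

Definition PP {R : realType} {K : nat} (F D : R) (l g : 'I_K -> R) (x : R) : R :=
  (D - \sum_k g k) * ln x + (F - \sum_k l k) / x.

Lemma gf_id (R : realType) K (F D : R) (l g : 'I_K -> R) (X : {set 'I_K}) :
  (forall k, 0 < g k) -> (forall k, 0 < l k) ->
  0 < sg F D l g X -> 0 < D - \sum_(k in X) g k ->
  (D - \sum_(k in X) g k) * ln (sg F D l g X) + \sum_(k in X) g k * ln (l k / g k) + D
  = PP F D l g (sg F D l g X) + \sum_k term l g (sg F D l g X) X k.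
Proof.
move=> Hg Hl x0 d0.
set x := sg F D l g X.
have ex : (F - \sum_(k in X) l k) * x^-1 = D - \sum_(k in X) g k.
  rewrite /x /sg invf_div mulrC divfK // gt_eqF //.
  by move: x0; rewrite /x /sg; rewrite pmulr_lgt0 ?invr_gt0.
rewrite [Z in _ = _ + Z](eq_bigr (fun k => (if k \in X then g k * ln (l k / g k) else 0)
   + (if k \in X then g k else 0) + (g k - (if k \in X then g k else 0)) * ln x
   + (l k - (if k \in X then l k else 0)) * x^-1)); last first.
  move=> k _; rewrite /term; case: ifP => _.
    have -> : l k / (l k / g k) = g k.
      by rewrite invf_div mulrCA mulfV ?gt_eqF // mulr1.
    ring.
  ring.
rewrite !big_split /= -!mulr_suml !sumrB -!big_mkcond /PP.
move: ex; set A := \sum_(k in X) _; set B := \sum_(k in X) g k.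
set C := \sum_k g k; set E := \sum_k l k; set G := \sum_(k in X) l k.
move=> ex. 
have e2 : (F - E) / x + (E - G) * x^-1 = (F - G) * x^-1 by ring.
lra.
Qed.

Lemma main_ineq (R : realType) K (F D : R) (l g : 'I_K -> R) (S T : {set 'I_K}) :
  (forall k, 0 < g k) -> (forall k, 0 < l k) ->
  0 <= D - \sum_k g k ->
  0 < sg F D l g S -> 0 < sg F D l g T -> 0 < D - \sum_(k in S) g k ->
  (forall k, k \in S -> sg F D l g S <= l k / g k) ->
  (forall j, j \notin S -> l j / g j < sg F D l g S) ->
  (forall k, k \in T -> sg F D l g T <= l k / g k) ->
  PP F D l g (sg F D l g S) + \sum_k term l g (sg F D l g S) S k <=
  PP F D l g (sg F D l g T) + \sum_k term l g (sg F D l g T) T k.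
Proof.
move=> Hg Hl Hall s0 t0 d0 HS1 HS2 HT1.
have eS : sg F D l g S * (D - \sum_(j in S) g j) = F - \sum_(j in S) l j.
  by rewrite /sg divfK // gt_eqF.
move: s0 t0 HS1 HS2 HT1 eS.
set s := sg F D l g S; set t := sg F D l g T => s0 t0 HS1 HS2 HT1 eS.
set u := t^-1 - s^-1.
pose sl k := (l k - (if k \in S then l k else 0)) - s * (g k - (if k \in S then g k else 0)).
have hk : forall k, term l g s S k + sl k * u <= term l g t T k.
  move=> k; rewrite /term /sl /u.
  have gk := Hg k; have lk := Hl k.
  have r0 : 0 < l k / g k by rewrite divr_gt0.
  have egr : g k * (l k / g k) = l k by rewrite mulrC divfK // gt_eqF.
  case: ifP => kS; case: ifP => kT.
  - lra.
  - have := tang (l k) (ltW gk) t0 r0; rewrite egr subrr mul0r addr0. lra.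
  - have hr : l k / g k < s by apply: HS2; rewrite kS.
    have htr : t <= l k / g k by apply: HT1.
    have := tang (l k) (ltW gk) r0 s0.
    have : (l k / g k)^-1 <= t^-1 by rewrite lef_pV2 ?posrE.
    have : l k - g k * s < 0.
      by move: hr; rewrite ltr_pdivrMr // => h; lra.
    nra.
  - have := tang (l k) (ltW gk) t0 s0. lra.
have hP := tang (F - \sum_k l k) Hall t0 s0.
have hs : \sum_k term l g s S k + (\sum_k sl k) * u <= \sum_k term l g t T k.
  rewrite mulr_suml -big_split /=; apply: ler_sum => k _; exact: hk.
have esl : \sum_k sl k = (\sum_k l k - \sum_(k in S) l k) - s * (\sum_k g k - \sum_(k in S) g k).
  rewrite /sl sumrB -mulr_sumr !sumrB -!big_mkcond //.
have c1 : ((F - \sum_k l k) - (D - \sum_k g k) * s) + \sum_k sl k = 0.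
  by rewrite esl; lra.
have c0 : ((F - \sum_k l k) - (D - \sum_k g k) * s) * u + (\sum_k sl k) * u = 0.
  by rewrite -mulrDl c1 mul0r.
rewrite -/u in hP; rewrite /PP.
move: hP hs c0.
set a1 := (F - _ - _) * u; set a2 := (\sum_k sl k) * u.
set Pt := (D - _) * ln t + _ / t; set Ps := (D - _) * ln s + _ / s.
move=> hP hs c0.
lra.
Qed.

Theorem mainTheorem6 (R : realType) (d N K : nat)
  (y : 'I_N -> 'cV[R]_d) (rho : 'I_K -> 'I_N -> R) (lam : 'I_K -> R) :
  (2 <= d)%N -> (1 <= N)%N -> (1 <= K)%N ->
  (forall k i, 0 <= rho k i) ->
  (forall i, \sum_(k < K) rho k i = 1) ->
  (forall k, is_largest_eigenvalue (Amat y rho k) (lam k)) ->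
  (forall k, 0 < gam rho k) ->
  (forall k, 0 < lam k) ->
  (forall S : {set 'I_K}, 0 < sigma2 y rho lam S) ->
  [/\ (* termination: no infinite run from the empty set *)
      Acc (fun S' S => step y rho lam S S') set0,
      (* every produced set lies in V *)
      (forall S, reachable y rho lam S -> inV y rho lam S) &
      (* every output is the unique saturated set and minimizes g over V *)
      (forall S, reachable y rho lam S -> candL y rho lam S = set0 ->
         [/\ saturated y rho lam S,
             (forall T, saturated y rho lam T -> T = S) &
             (forall T, inV y rho lam T -> gfun y rho lam S <= gfun y rho lam T)])].
Proof.
move=> d2 N1 K1 rho0 rho1 _ Hg Hl Hs.
set F := frob2 (dataY y); set D : R := (d * N)%:R.
have es : forall S, sigma2 y rho lam S = sg F D lam (gam rho) S by [].
have Hsum : \sum_k gam rho k = N%:R.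
  rewrite /gam exchange_big /= (eq_bigr (fun _ => 1)) //.
  by rewrite sumr_const card_ord.
have Hall : 0 < D - \sum_k gam rho k.
  rewrite Hsum /D natrM.
  have h1 : (2%:R : R) <= d%:R by rewrite ler_nat.
  have h2 : (0 : R) < N%:R by rewrite ltr0n.
  nra.
have HD : forall S : {set 'I_K}, 0 < D - \sum_(k in S) gam rho k.
  move=> S; apply: lt_le_trans Hall _; rewrite lerD2l lerN2 big_mkcond /=.
  apply: ler_sum => k _; case: ifP => _ //; exact: ltW.
have reachV : forall S, reachable y rho lam S -> inV y rho lam S.
  move=> S; elim => [|S0 S' _ IH [k hk ->]]; first by move=> k; rewrite inE.
  rewrite inE in hk; case/andP: hk => kS hk.
  have st := sg_step HD Hg kS hk.
  move=> j; rewrite in_setU1 => /orP[/eqP->|jS]; first exact: le_trans st hk.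
  exact: le_trans st (IH _ jS).
split; [|exact: reachV|].
  apply: acc_card => S S' [k hk ->].
  rewrite inE in hk; case/andP: hk => kS _.
  by rewrite cardsU1 kS.
move=> S hR hC.
have hS1 := reachV _ hR.
have hS2 : forall j, j \notin S -> lam j / gam rho j < sigma2 y rho lam S.
  move=> j jS; have : j \in candL y rho lam S = false by rewrite hC inE.
  by rewrite inE jS /= => /negbT; rewrite -ltNge.
split; first by split.
  move=> T [hT1 hT2].
  have [st|ts] := leP (sigma2 y rho lam S) (sigma2 y rho lam T).
    have sTS : T \subset S.
      apply/subsetP => k kT; apply/negPn/negP => kS.
      have := hS2 _ kS; have := hT1 _ kT; lra.
    have sST := sat_sub HD Hg hT2 hS1 sTS.
    by apply/eqP; rewrite eqEsubset sTS sST.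
  have sST : S \subset T.
    apply/subsetP => k kS; apply/negPn/negP => kT.
    have := hT2 _ kT; have := hS1 _ kS; lra.
  have sTS := sat_sub HD Hg hS2 hT1 sST.
  by apply/eqP; rewrite eqEsubset sTS sST.
move=> T hT.
have e1 := gf_id Hg Hl (Hs S) (HD S).
have e2 := gf_id Hg Hl (Hs T) (HD T).
have mi := main_ineq Hg Hl (ltW Hall) (Hs S) (Hs T) (HD S) hS1 hS2 hT.
rewrite -(lerD2r D) /gfun -/(sg F D lam (gam rho) S) -/(sg F D lam (gam rho) T).
rewrite e1 e2; exact: mi.
Qed.
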